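(* Let $X$ be an ordered Hausdorff space. Then $nw(Q_{P}(X)) = w(Q_{P}(X)) = |X|$.
   Context: An ordered Hausdorff space is a set carrying a linear order, equipped with its order topology, which is Hausdorff. A function $f\colon X\to Y$ between topological spaces is quasi-continuous at $x\in X$ if for every open $U\ni x$ and every open $V\ni f(x)$ there is a non-empty open $G\subseteq U$ with $f(G)\subseteq V$; $f$ is quasi-continuous if it is quasi-continuous at every point. $Q_{P}(X)$ is the set of all quasi-continuous functions $X\to\mathbb{R}$ with the topology of point-wise convergence, i.e. the subspace topology from $\mathbb{R}^{X}$; basic open sets are $\{g : g(x_i)\in U_i,\ 1\le i\le n\}$ with $x_i\in X$ and $U_i$ open in $\mathbb{R}$. For a space $Z$: $w(Z)=\aleph_0+\min\{|\mathcal{B}| : \mathcal{B}\text{ a base of }Z\}$; $nw(Z)=\aleph_0+\min\{|\mathcal{N}| : \mathcal{N}\text{ a network of }Z\}$, where a network is a family $\mathcal{N}$ of subsets of $Z$ such that for every $z\in Z$ and every open $U\ni z$ there is $N\in\mathcal{N}$ with $z\in N\subseteq U$. $|X|$ is the cardinality of $X$. *)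

(* Defs.v *)
From HB Require Import structures.
From mathcomp Require Import all_boot all_order all_algebra.
From mathcomp Require Import all_classical all_reals all_analysis.

Set Implicit Arguments.
Unset Strict Implicit.
Unset Printing Implicit Defensive.

Import Order.TTheory GRing.Theory Num.Theory numFieldNormedType.Exports.
Local Open Scope classical_set_scope.
Local Open Scope card_scope.

Definition quasi_continuous_at {X Y : topologicalType} (f : X -> Y) (x : X) :=
  forall (U : set X) (V : set Y), open U -> U x -> open V -> V (f x) ->
    exists G : set X, [/\ open G, G !=set0, G `<=` U & f @` G `<=` V].

Definition quasi_continuous {X Y : topologicalType} (f : X -> Y) :=
  forall x, quasi_continuous_at f x.

(** Q_P(X): the quasi-continuous real functions on X, as a subspace of the
    space {ptws X -> R} of all functions with pointwise convergence topology
    (set_type carries the subspace = initial topology of the inclusion). *)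
Definition QP (X : topologicalType) (R : realType) : topologicalType :=
  set_type [set f : {ptws X -> R} | @quasi_continuous X R f].

Definition is_base {Z : topologicalType} (B : set (set Z)) :=
  (forall b, B b -> open b) /\
  (forall (z : Z) (U : set Z), open U -> U z ->
     exists b, [/\ B b, b z & b `<=` U]).

Definition is_network {Z : topologicalType} (N : set (set Z)) :=
  forall (z : Z) (U : set Z), open U -> U z ->
    exists n, [/\ N n, n z & n `<=` U].

(** |A| <= aleph_0 + |B|  (the sum is realised as the disjoint union nat + B) *)
Definition card_le_aleph0_plus {T U : Type} (A : set T) (B : set U) :=
  A #<= [set x : nat + U | match x with inl _ => True | inr u => B u end].

(** aleph_0 + |B| <= |A|  (equivalently aleph_0 <= |A| and |B| <= |A|) *)
Definition aleph0_plus_card_le {T U : Type} (B : set U) (A : set T) :=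
  [set: nat] #<= A /\ B #<= A.

(** w(Z) = |A|, where w(Z) = aleph_0 + min{|B| : B a base of Z}. *)
Definition weight_eq {T : Type} (Z : topologicalType) (A : set T) :=
  (exists B : set (set Z), is_base B /\ aleph0_plus_card_le B A) /\
  (forall B : set (set Z), is_base B -> card_le_aleph0_plus A B).

(** nw(Z) = |A|, where nw(Z) = aleph_0 + min{|N| : N a network of Z}. *)
Definition netweight_eq {T : Type} (Z : topologicalType) (A : set T) :=
  (exists N : set (set Z), is_network N /\ aleph0_plus_card_le N A) /\
  (forall N : set (set Z), is_network N -> card_le_aleph0_plus A N).

(* Main.v *)
Require Import Defs.
From HB Require Import structures.
From mathcomp Require Import all_boot all_order all_algebra.
From mathcomp Require Import all_classical all_reals all_analysis.
From mathcomp Require Import lra.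

Local Open Scope classical_set_scope.

Module Helpers.
Set Implicit Arguments.
Unset Strict Implicit.
Unset Printing Implicit Defensive.
Import Order.TTheory GRing.Theory Num.Theory numFieldNormedType.Exports.
Local Open Scope classical_set_scope.
Local Open Scope card_scope.
Lemma card_le_fun T U (A : set T) (B : set U) (u0 : U) :
  A #<= B -> exists f : T -> U, (forall x, A x -> B (f x)) /\
     (forall x y, A x -> A y -> f x = f y -> x = y).
Proof.
move/card_leP => [f].

pose g x := match pselect (A x) with left ax => set_val (f (exist _ x (mem_set ax))) | right _ => u0 end.
exists g; split.
  move=> x ax; rewrite /g; case: pselect => // ax'.
  apply: set_mem; exact: valP.
move=> x y ax ay; rewrite /g; case: pselect => // ax'; case: pselect => // ay'.
move=> E. have := @inj _ _ _ f (exist _ x (mem_set ax')) (exist _ y (mem_set ay')) (mem_set I) (mem_set I). move=> H; have := H (val_inj E). by case.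
Qed.

Lemma inj_le T U (A : set T) (B : set U) (f : T -> U) :
  (forall x, A x -> B (f x)) ->
  (forall x y, A x -> A y -> f x = f y -> x = y) -> A #<= B.
Proof.
move=> fAB finj.
have : $|{injfun A >-> B}|.
  apply/injfunPex; exists f; first by move=> x /fAB.
  by move=> x y /set_mem ax /set_mem ay; exact: finj.
by case=> g; exact: inj_card_le.
Qed.

Lemma rel_card_le T U (A : set T) (B : set U) (R : T -> U -> Prop) :
  (forall x, A x -> exists y, B y /\ R x y) ->
  (forall x x' y, A x -> A x' -> R x y -> R x' y -> x = x') -> A #<= B.
Proof.
move=> Rtot Rinj.
have [[a0 Aa0]|A0] := pselect (A !=set0); last first.
  have -> : A = set0 by apply/seteqP; split=> // x Ax; apply: A0; exists x.
  exact: card_ge0.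
have [y0 _] := Rtot _ Aa0.
pose f x := match pselect (exists y, B y /\ R x y) with
  left e => projT1 (cid e) | right _ => y0 end.
apply: (@inj_le _ _ _ _ f).
  move=> x Ax; rewrite /f; case: pselect => [e|[]]; last exact: Rtot.
  by have [] := projT2 (cid e).
move=> x x' Ax Ax'; rewrite /f; case: pselect => [e|[]]; last exact: Rtot.
case: pselect => [e'|[]]; last exact: Rtot.
have [_ Rxy] := projT2 (cid e); have [_ Rxy'] := projT2 (cid e') => yy'.
by rewrite yy' in Rxy; exact: (Rinj _ _ _ Ax Ax' Rxy Rxy').
Qed.

Lemma card_compare T U (A : set T) (B : set U) : A #<= B \/ B #<= A.
Proof.
pose P := [set H : set (T * U) | [/\ (forall p, H p -> A p.1 /\ B p.2),
   (forall a b b', H (a, b) -> H (a, b') -> b = b') &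
   (forall a a' b, H (a, b) -> H (a', b) -> a = a')]].
have [H [PH Hmax]] : exists H, P H /\ forall K, H `<` K -> ~ P K.
  apply: Zorn_bigcup => F FP Ftot; split.
  - by move=> p [K FK Kp]; have [+ _ _] := FP _ FK; apply.
  - move=> a b b' [K FK Kab] [K' FK' Kab'].
    have [KK'|K'K] := Ftot _ _ FK FK'.
      by have [_ h _] := FP _ FK'; apply: (h a); [apply: KK'|].
    by have [_ h _] := FP _ FK; apply: (h a); [|apply: K'K].
  - move=> a a' b [K FK Kab] [K' FK' Kab'].
    have [KK'|K'K] := Ftot _ _ FK FK'.
      by have [_ _ h] := FP _ FK'; apply: (h _ _ b); [apply: KK'|].
    by have [_ _ h] := FP _ FK; apply: (h _ _ b); [|apply: K'K].
have [HAB Hf Hi] := PH.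
have [dom|] := pselect (forall a, A a -> exists b, B b /\ H (a, b)).
  left; apply: (rel_card_le (R := fun a b => H (a, b))) => //.
  by move=> x x' y _ _; exact: Hi.
move=> /existsNP [a0 /not_implyP [Aa0 Na0]].
right; apply: (rel_card_le (R := fun b a => H (a, b))); last first.
  by move=> x x' y _ _; exact: Hf.
move=> b Bb; apply: contrapT => Nb.
apply: (Hmax (H `|` [set (a0, b)])); last first.
  split.
  - by move=> p [/HAB //|->].
  - move=> a c c' [Hac|/pair_equal_spec[? ?]] [Hac'|/pair_equal_spec[? ?]]; subst => //.
    + by apply: Hf Hac Hac'.
    + by exfalso; apply: Na0; exists c; split => //; have [] := HAB _ Hac.
    + by exfalso; apply: Na0; exists c'; split => //; have [] := HAB _ Hac'.
  - move=> a a' c [Hac|/pair_equal_spec[? ?]] [Hac'|/pair_equal_spec[? ?]]; subst => //.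
    + by apply: Hi Hac Hac'.
    + by exfalso; apply: Nb; exists a; split => //; have [] := HAB _ Hac.
    + by exfalso; apply: Nb; exists a'; split => //; have [] := HAB _ Hac'.
split; first by move=> p Hp; left.
move=> /(_ (a0, b)) HH; apply: Na0; exists b; split => //; apply: HH; by right.
Qed.

Lemma choose_fun T U (u0 : U) (P : T -> Prop) (R : T -> U -> Prop) :
  (forall x, P x -> exists y, R x y) -> exists f : T -> U, forall x, P x -> R x (f x).
Proof.
move=> H.
exists (fun x => match pselect (exists y, R x y) with
  left e => projT1 (cid e) | right _ => u0 end).
move=> x Px; case: pselect => [e|[]]; last exact: H.
exact: projT2 (cid e).
Qed.

Lemma sq_le T : infinite_set [set: T] -> [set: T * T] #<= [set: T].
Proof.
move=> Tinf.
have [t0 _] := infinite_setN0 Tinf.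
have [e [_ einj]] := card_le_fun t0 (proj1 (infiniteP _) Tinf).
have einj' i j : e i = e j -> i = j by move=> /einj; apply.
have [pn [_ pninj]] := card_le_fun 0%N (proj1 (card_eqPle _ _) card_nat2).1.
have pninj' p q : pn p = pn q -> p = q by move=> /pninj; apply.
pose Z := (T + ((T * T) * T))%type.
pose E0 : set Z := fun z => match z with
  | inl a => exists i, a = e i
  | inr t => exists i j, t = ((e i, e j), e (pn (i, j))) end.
pose P : set (set Z) := fun E =>
  [/\ (forall p c, E (inr (p, c)) -> [/\ E (inl p.1), E (inl p.2) & E (inl c)]),
      (forall p c c', E (inr (p, c)) -> E (inr (p, c')) -> c = c'),
      (forall p p' c, E (inr (p, c)) -> E (inr (p', c)) -> p = p'),
      (forall a b, E (inl a) -> E (inl b) -> exists c, E (inr ((a, b), c))) &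
      (E = set0 \/ E0 `<=` E)].
have PE0 : P E0.
  split.
  - move=> p c /= [i [j /pair_equal_spec[-> ->]]] /=.
    by split; [exists i|exists j|exists (pn (i, j))].
  - move=> p c c' /= [i [j /pair_equal_spec[-> ->]]].
    move=> [i' [j' /pair_equal_spec[/pair_equal_spec[/einj' ? /einj' ?] ->]]].
    by subst.
  - move=> p p' c /= [i [j /pair_equal_spec[-> ->]]].
    move=> [i' [j' /pair_equal_spec[-> /einj' /pninj' /pair_equal_spec[? ?]]]].
    by subst.
  - by move=> a b [i ->] [j ->]; exists (e (pn (i, j))); exists i, j.
  - by right.
have [E [PE Emax]] : exists E, P E /\ forall K, E `<` K -> ~ P K.
  apply: Zorn_bigcup => F FP Ftot.
  have cmp K K' : F K -> F K' -> exists K'', [/\ F K'', K `<=` K'' & K' `<=` K''].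
    move=> FK FK'; have [KK'|K'K] := Ftot _ _ FK FK'.
      by exists K'; split.
    by exists K; split.
  split.
  - move=> p c [K FK Kpc]; have [h _ _ _ _] := FP _ FK.
    by have [h1 h2 h3] := h _ _ Kpc; split; exists K.
  - move=> p c c' [K FK Kpc] [K' FK' Kpc'].
    have [K'' [FK'' KK'' K'K'']] := cmp _ _ FK FK'.
    have [_ h _ _ _] := FP _ FK''.
    by apply: (h p); [apply: KK''|apply: K'K''].
  - move=> p p' c [K FK Kpc] [K' FK' Kpc'].
    have [K'' [FK'' KK'' K'K'']] := cmp _ _ FK FK'.
    have [_ _ h _ _] := FP _ FK''.
    by apply: (h _ _ c); [apply: KK''|apply: K'K''].
  - move=> a b [K FK Ka] [K' FK' Kb].
    have [K'' [FK'' KK'' K'K'']] := cmp _ _ FK FK'.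
    have [_ _ _ h _] := FP _ FK''.
    have [c Kc] := h a b (KK'' _ Ka) (K'K'' _ Kb).
    by exists c; exists K''.
  - have [[K [FK E0K]]|NK] := pselect (exists K, F K /\ E0 `<=` K).
      by right; move=> z E0z; exists K => //; apply: E0K.
    left; apply/seteqP; split => // z [K FK Kz].
    have [_ _ _ _ [K0|E0K]] := FP _ FK.
      by rewrite K0 in Kz.
    by exfalso; apply: NK; exists K.
have [Ec1 Ec2 Ec3 Ec4 Ec5] := PE.
have E0E : E0 `<=` E.
  case: Ec5 => // E0'; exfalso; apply: (Emax E0) => //.
  rewrite E0'; split => //; move=> /(_ (inl (e 0%N))) h.
  by have := h (ex_intro _ 0%N erefl).
pose A : set T := fun a => E (inl a).
have Ae i : A (e i) by apply: E0E; exists i.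
have [g' gP] := choose_fun t0 (P := fun p : T * T => A p.1 /\ A p.2)
   (R := fun p c => E (inr (p, c))) (fun p => match p with (x, y) => fun '(conj h1 h2) => Ec4 x y h1 h2 end).
pose g a b := g' (a, b).
have gE a b : A a -> A b -> E (inr ((a, b), g a b)).
  by move=> Aa Ab; exact: (gP (a, b)).
have gA a b : A a -> A b -> A (g a b).
  by move=> Aa Ab; have [] := Ec1 _ _ (gE a b Aa Ab).
have ginj a b a' b' : A a -> A b -> A a' -> A b' -> g a b = g a' b' ->
    a = a' /\ b = b'.
  move=> Aa Ab Aa' Ab' gg.
  have := Ec3 _ _ _ (gE a b Aa Ab); rewrite gg => /(_ _ (gE a' b' Aa' Ab')).
  by move=> /pair_equal_spec.
suff hT : [set: T] #<= A.
  have [h [hA hinj]] := card_le_fun t0 hT.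
  apply: (@inj_le _ _ _ _ (fun p => g (h p.1) (h p.2))) => // -[x y] [x' y'] _ _ /=.
  move=> /ginj [] //; try exact: hA.
  by move=> /hinj -> // /hinj ->.
have [/(card_le_fun t0)[k [kA kinj]]|] := card_compare (~` A) A.
  pose f x := if pselect (A x) then g x (e 0%N) else g (k x) (e 1%N).
  apply: (@inj_le _ _ _ _ f).
    by move=> x _; rewrite /f; case: pselect => Ax; apply: gA => //; apply: kA.
  move=> x y _ _; rewrite /f; case: pselect => Ax; case: pselect => Ay.
  - by move/(ginj _ _ _ _ Ax (Ae 0%N) Ay (Ae 0%N)) => [].
  - by move/(ginj _ _ _ _ Ax (Ae 0%N) (kA _ Ay) (Ae 1%N)) => [_ /einj'].
  - by move/(ginj _ _ _ _ (kA _ Ax) (Ae 1%N) Ay (Ae 0%N)) => [_ /einj'].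
  - by move/(ginj _ _ _ _ (kA _ Ax) (Ae 1%N) (kA _ Ay) (Ae 1%N)) => [/kinj + _]; apply.
move=> /(card_le_fun t0) [m [mA minj]].
pose B : set T := m @` A.
have AB0 b : A b -> B b -> False by move=> Ab [a Aa mab]; apply: (mA _ Aa); rewrite mab.
have [m' m'P] := choose_fun t0 (P := B) (R := fun v a => A a /\ m a = v)
  (fun v '(ex_intro2 a Aa mav) => ex_intro _ a (conj Aa mav)).
pose AB u := A u \/ B u.
pose q u := if pselect (A u) then g u (e 0%N) else g (m' u) (e 1%N).
have BAB u : AB u -> ~ A u -> B u by case.
have m'A u : B u -> A (m' u) by move=> /m'P[].
have qA u : AB u -> A (q u).
  move=> ABu; rewrite /q; case: pselect => Au; first by apply: gA.
  by apply: gA => //; apply/m'A/BAB.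
have qinj u v : AB u -> AB v -> q u = q v -> u = v.
  move=> ABu ABv; rewrite /q; case: pselect => Au; case: pselect => Av.
  - by move/(ginj _ _ _ _ Au (Ae 0%N) Av (Ae 0%N)) => [].
  - by move/(ginj _ _ _ _ Au (Ae 0%N) (m'A _ (BAB _ ABv Av)) (Ae 1%N)) => [_ /einj'].
  - by move/(ginj _ _ _ _ (m'A _ (BAB _ ABu Au)) (Ae 1%N) Av (Ae 0%N)) => [_ /einj'].
  - move/(ginj _ _ _ _ (m'A _ (BAB _ ABu Au)) (Ae 1%N) (m'A _ (BAB _ ABv Av)) (Ae 1%N)).
    move=> [muv _].
    have [_ <-] := m'P _ (BAB _ ABu Au); have [_ <-] := m'P _ (BAB _ ABv Av).
    by rewrite muv.
pose code u v := m (g (q u) (q v)).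
have codeB u v : AB u -> AB v -> B (code u v).
  by move=> ABu ABv; exists (g (q u) (q v)) => //; apply: gA; apply: qA.
have codeinj u v u' v' : AB u -> AB v -> AB u' -> AB v' ->
    code u v = code u' v' -> u = u' /\ v = v'.
  move=> ABu ABv ABu' ABv' /minj.
  move=> /(_ (gA _ _ (qA _ ABu) (qA _ ABv)) (gA _ _ (qA _ ABu') (qA _ ABv'))).
  move=> /(ginj _ _ _ _ (qA _ ABu) (qA _ ABv) (qA _ ABu') (qA _ ABv')) [].
  by move=> /qinj -> // /qinj ->.
pose E' : set Z := fun z => E z \/ match z with
  | inl b => B b
  | inr t => [/\ AB t.1.1, AB t.1.2, ~ (A t.1.1 /\ A t.1.2) & t.2 = code t.1.1 t.1.2]
  end.
exfalso; apply: (Emax E'); last first.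
  split.
  - move=> p c [Epc|[h1 h2 h3 h4]].
      by have [x y z] := Ec1 _ _ Epc; split; left.
    by split => //; right; move: h4 => /= ->; exact: codeB.
  - move=> p c c' [E1|[h1 h2 h3 h4]] [E2|[h1' h2' h3' h4']].
    + exact: Ec2 E1 E2.
    + by exfalso; apply: h3'; have [] := Ec1 _ _ E1.
    + by exfalso; apply: h3; have [] := Ec1 _ _ E2.
    + by move: h4 h4' => /= -> ->.
  - move=> p p' c [E1|[h1 h2 h3 h4]] [E2|[h1' h2' h3' h4']].
    + exact: Ec3 E1 E2.
    + by exfalso; have [_ _ Ac] := Ec1 _ _ E1; apply: (AB0 c) => //; move: h4' => /= ->; exact: codeB.
    + by exfalso; have [_ _ Ac] := Ec1 _ _ E2; apply: (AB0 c) => //; move: h4 => /= ->; exact: codeB.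
    + move: h4 h4' => /= -> /codeinj [] //.
      by case: p h1 h2 {h3} => x y /= _ _ -> ->; case: p' {h1' h2' h3'}.
  - move=> a b Ea Eb.
    have [[Aa Ab]|nAB] := pselect (A a /\ A b).
      by have [c Ec] := Ec4 a b Aa Ab; exists c; left.
    by exists (code a b); right; split.
  - by right => z /E0E Ez; left.
split; first by move=> z Ez; left.
move=> /(_ (inl (m (e 0%N)))) h.
have : E (inl (m (e 0%N))) by apply: h; right; exists (e 0%N).
by apply: (mA _ (Ae 0%N)).
Qed.

Lemma seqXQ_le T : infinite_set [set: T] ->
  [set: seq (T * (rat * rat))] #<= [set: T].
Proof.
move=> Tinf.
have [t0 _] := infinite_setN0 Tinf.
have [e [_ einj]] := card_le_fun t0 (proj1 (infiniteP _) Tinf).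
have [rn [_ rninj]] := card_le_fun 0%N (proj1 (card_eqPle _ _) card_rat).1.
have [pr' [_ prinj']] := card_le_fun t0 (sq_le Tinf).
pose pr x y := pr' (x, y).
have prinj x y x' y' : pr x y = pr x' y' -> x = x' /\ y = y'.
  by move=> h; apply/pair_equal_spec; apply: (prinj' _ _ I I h).
have e01 : e 0%N <> e 1%N by move=> h; have := einj _ _ I I h.
pose er r := e (rn r).
have erinj r r' : er r = er r' -> r = r'.
  by move=> h; apply: (rninj _ _ I I); apply: (einj _ _ I I h).
pose el (t : T * (rat * rat)) := pr t.1 (pr (er t.2.1) (er t.2.2)).
have elinj t t' : el t = el t' -> t = t'.
  case: t => x [a b]; case: t' => x' [a' b']; rewrite /el /=.
  by move=> /prinj [-> /prinj [/erinj -> /erinj ->]].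
pose fix enc (s : seq (T * (rat * rat))) : T :=
  if s is t :: s' then pr (e 1%N) (pr (el t) (enc s')) else pr (e 0%N) (e 0%N).
apply: (@inj_le _ _ _ _ enc) => // s s' _ _.
elim: s s' => [|t s IH] [|t' s'] /=.
- by [].
- by move=> /prinj [/e01].
- by move=> /prinj [/esym/e01].
- by move=> /prinj [_ /prinj [/elinj -> /IH ->]].
Qed.

Section QPtop.
Variables (R : realType) (d : Order.disp_t) (X : orderTopologicalType d).

Lemma QP_open_of (V : set {ptws X -> R}) : open V ->
  @open (QP X R) (set_val @^-1` V).
Proof. by move=> oV; exists V. Qed.

Lemma QP_open_to (O : set (QP X R)) : open O ->
  exists V : set {ptws X -> R}, open V /\ set_val @^-1` V = O.
Proof. by case=> V oV <-; exists V. Qed.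

Lemma ev_open (x : X) (O : set R) : open O ->
  @open {ptws X -> R} [set g | O (g x)].
Proof.
move=> oO.
have cont : continuous (fun g : {ptws X -> R} => g x).
  move=> f; have /pointwise_cvgP : {ptws, nbhs f --> f} by exact: cvg_id.
  by move=> /(_ x).
exact: (proj1 (continuousP _) cont _ oO).
Qed.


Lemma qc_of (f : X -> R) (y : X) :
  (forall U, open U -> U y ->
     exists G, [/\ open G, G !=set0, G `<=` U & forall z, G z -> f z = f y]) ->
  quasi_continuous_at f y.
Proof.
move=> H U V oU Uy oV Vfy; have [G [oG G0 GU Gf]] := H U oU Uy.
by exists G; split => // _ [z Gz <-]; rewrite Gf.
Qed.

Lemma open_gtX (x : X) : open [set z : X | (x < z)%O].
Proof.
have -> : [set z : X | (x < z)%O] = `]x, +oo[%classic.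
  by apply/seteqP; split => z; rewrite /= in_itv /= andbT.
exact: rray_open.
Qed.

Lemma open_ltX (x : X) : open [set z : X | (z < x)%O].
Proof.
have -> : [set z : X | (z < x)%O] = `]-oo, x[%classic.
  by apply/seteqP; split => z; rewrite /= in_itv /=.
exact: lray_open.
Qed.

Definition Xo (x : X) := exists W : set X, [/\ open W, W x & forall z, W z -> (z <= x)%O].

Definition cx (x : X) : R := if pselect (Xo x) then 2%R else 1%R.
Definition vx (x : X) : R := if pselect (Xo x) then 0%R else 1%R.

Definition fx (x : X) : X -> R := fun z =>
  if (z < x)%O then 0%R else if (x < z)%O then cx x else vx x.

Lemma fx_lt x z : (z < x)%O -> fx x z = 0%R.
Proof. by rewrite /fx => ->. Qed.
Lemma fx_gt x z : (x < z)%O -> fx x z = cx x.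
Proof. by rewrite /fx => xz; rewrite xz ltNge (ltW xz). Qed.
Lemma fx_eq x : fx x x = vx x.
Proof. by rewrite /fx ltxx. Qed.

Lemma fx_qc x : quasi_continuous (fx x).
Proof.
move=> y; apply: qc_of => U oU Uy.
case: (ltgtP y x) => [yx|xy|<-].
- exists (U `&` [set z | (z < x)%O]); split.
  + exact: openI oU (open_ltX x).
  + by exists y.
  + by move=> z [].
  + by move=> z [_ zx]; rewrite !fx_lt.
- exists (U `&` [set z | (x < z)%O]); split.
  + exact: openI oU (open_gtX x).
  + by exists y.
  + by move=> z [].
  + by move=> z [_ zx]; rewrite !fx_gt.
- case: (pselect (Xo y)) => [[W [oW Wy Wle]]|NXo].
  + exists (U `&` W); split.
    * exact: openI.
    * by exists y.
    * by move=> z [].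
    * move=> z [_ /Wle]; rewrite le_eqVlt => /orP[/eqP ->//|zy].
      by rewrite fx_lt // fx_eq /vx; case: pselect => // -[]; exists W.
  + exists (U `&` [set z | (y < z)%O]); split.
    * exact: openI oU (open_gtX y).
    * apply: contrapT => N; apply: NXo; exists U; split => // z Uz.
      by rewrite leNgt; apply/negP => yz; apply: N; exists z.
    * by move=> z [].
    * move=> z [_ yz]; rewrite fx_gt // fx_eq /cx /vx.
      by case: pselect.
Qed.


Definition phi (x : X) : QP X R :=
  @exist _ (fun f : {ptws X -> R} => f \in [set f : {ptws X -> R} | quasi_continuous f])
    (fx x : {ptws X -> R}) (mem_set (@fx_qc x)).

Lemma phiE x : set_val (phi x) = fx x :> (X -> R).
Proof. by []. Qed.

Definition Wx (x : X) : set (QP X R) :=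
  set_val @^-1` [set g : {ptws X -> R} | ball (fx x x) (2^-1)%R (g x)].

Lemma Wx_open x : open (Wx x).
Proof. by apply: QP_open_of; apply: ev_open; exact: ball_open. Qed.

Lemma Wx_phi x : Wx x (phi x).
Proof. by rewrite /Wx /= phiE; exact: ballxx. Qed.

Lemma key x y : (x < y)%O -> Wx x (phi y) -> Wx y (phi x) -> False.
Proof.
move=> xy; rewrite /Wx /= !phiE (fx_lt xy) (fx_gt xy) !fx_eq.
rewrite /ball /= /cx /vx.
case: (pselect (Xo x)) => ?; case: (pselect (Xo y)) => ? /=.
all: by clear xy; move=> /ltr_normlP [? ?] /ltr_normlP [? ?]; lra.
Qed.


Lemma nw_lower (N : set (set (QP X R))) : is_network N ->
  card_le_aleph0_plus [set: X] N.
Proof.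
move=> netN.
have [nx nxP] := choose_fun set0 (P := [set: X])
  (R := fun x n => [/\ N n, n (phi x) & n `<=` Wx x])
  (fun x _ => netN _ _ (Wx_open x) (Wx_phi x)).
rewrite /card_le_aleph0_plus.
apply: (@inj_le _ _ _ _ (fun x => inr (nx x))).
  by move=> x _ /=; have [] := nxP x I.
move=> x y _ _ [nxy].
have [_ nx_x nx_W] := nxP x I; have [_ ny_y ny_W] := nxP y I.
case: (ltgtP x y) => // [xy|yx]; exfalso.
- by apply: (key xy); [apply: nx_W; rewrite nxy|apply: ny_W; rewrite -nxy].
- by apply: (key yx); [apply: ny_W; rewrite -nxy|apply: nx_W; rewrite nxy].
Qed.

Definition Sp (s : seq (X * (rat * rat))) : set {ptws X -> R} :=
  [set g | forall t, t \in s -> (ratr t.2.1 < g t.1)%R /\ (g t.1 < ratr t.2.2)%R].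

Definition Sb (s : seq (X * (rat * rat))) : set (QP X R) := set_val @^-1` Sp s.

Lemma Sp_open s : open (Sp s).
Proof.
elim: s => [|t s IH].
  have -> : Sp [::] = setT by apply/seteqP; split => // g _ t; rewrite in_nil.
  exact: openT.
have -> : Sp (t :: s) = [set g : {ptws X -> R} |
    ([set r | ratr t.2.1 < r] `&` [set r | r < ratr t.2.2])%R (g t.1)] `&` Sp s.
  apply/seteqP; split => g.
    by move=> H; split; [apply: H; rewrite mem_head|move=> t' ts; apply: H; rewrite in_cons ts orbT].
  move=> [H1 H2] t'; rewrite in_cons => /orP[/eqP ->//|]; exact: H2.
apply: openI => //; apply: ev_open; apply: openI; [exact: open_gt|exact: open_lt].
Qed.

Definition Bs : set (set (QP X R)) := Sb @` setT.

Lemma Bs_base : is_base Bs.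
Proof.
split.
  by move=> _ [s _ <-]; apply: QP_open_of; exact: Sp_open.
move=> z U oU Uz.
have [V [oV VU]] := QP_open_to oU.
pose D := [set s | Sp s (set_val z)].
pose F := filter_from D Sp.
have FF : Filter F.
  apply: filter_from_filter.
    by exists [::] => t; rewrite /D /Sp /= in_nil.
  move=> s1 s2 D1 D2; exists (s1 ++ s2).
    by move=> t; rewrite mem_cat => /orP[/D1|/D2].
  by move=> g Hg; split => t ts; apply: Hg; rewrite mem_cat ts ?orbT.
have cvF : {ptws, F --> set_val z}.
  apply/pointwise_cvgP => t A /nbhs_ballP [eps /= eps0 epsA].
  set v := set_val z t.
  have [a] : exists a : rat, (v - eps < ratr a < v)%R.
    have [q] : exists q : rat, (ratr q \in `]v - eps, v[)%R.
      by apply: rat_in_itvoo; rewrite ltrBlDr ltrDl.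
    by rewrite in_itv /=; exists q.
  move=> /andP[a1 a2].
  have [b] : exists b : rat, (v < ratr b < v + eps)%R.
    have [q] : exists q : rat, (ratr q \in `]v, v + eps[)%R.
      by apply: rat_in_itvoo; rewrite ltrDl.
    by rewrite in_itv /=; exists q.
  move=> /andP[b1 b2].
  exists [:: (t, (a, b))].
    by move=> t'; rewrite mem_seq1 => /eqP -> /=.
  move=> g /= Hg; have [g1 g2] := Hg (t, (a, b)) (mem_head _ _); apply: epsA.
  rewrite /ball /= ltr_distlC; apply/andP; split; rewrite -/v /=; lra.
rewrite -VU in Uz.
have [s Ds SsV] := cvF V (open_nbhs_nbhs (conj oV Uz)).
exists (Sb s); split => //; first by exists s.
by rewrite -VU => g; exact: SsV.
Qed.

End QPtop.


End Helpers.
Import Helpers.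

Theorem mainTheorem1 (R : realType) (d : Order.disp_t)
  (X : orderTopologicalType d) :
  hausdorff_space X -> infinite_set [set: X] ->
  netweight_eq (QP X R) [set: X] /\ weight_eq (QP X R) [set: X].
Proof.
move=> _ Xinf.
have natX := proj1 (infiniteP _) Xinf.
have BX : (@Bs R d X #<= [set: X])%card.
  apply: card_le_trans (card_image_le _ _) _.
  exact: seqXQ_le.
have base := @Bs_base R d X.
split; split.
- exists (@Bs R d X); split => //.
  by move=> z U oU Uz; have [_ h] := base; exact: h.
- by move=> N; exact: nw_lower.
- by exists (@Bs R d X).
- by move=> B [_ Bnet]; exact: nw_lower.
Qed.
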